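(* There is a deterministic $1$-local $0$-memory routing algorithm on half-$\theta_6$-graphs such that for every finite point set $P$ in general position and all $u,w\in P$ with $w$ in a positive cone of $u$, the path followed when routing from $u$ to $w$ has length at most $(\sqrt{3}\cos\alpha+\sin\alpha)\cdot|uw|$, where $m$ is the midpoint of the side of the canonical triangle $T_{uw}$ opposite $u$ and $\alpha$ is the unsigned angle between $uw$ and $um$.
   Context: Cones: for a point $u$, the plane is partitioned into six cones with apex $u$, bounded by the rays from $u$ at angles $j\pi/3$ ($j=0,\dots,5$) from the positive $x$-axis; counterclockwise from the positive $x$-axis they are $\overline{C}_1, C_0, \overline{C}_2, C_1, \overline{C}_0, C_2$; $C_0,C_1,C_2$ are positive and the others negative. General position: no two points of $P$ lie on a line parallel to a cone boundary ray. Half-$\theta_6$-graph of $P$: for each $u$ and each positive cone $C$ of $u$ containing other points, add an edge from $u$ to the point of $P$ in $C$ whose orthogonal projection onto the bisector of $C$ is closest to $u$; edges weighted by Euclidean length. Canonical triangle $T_{uv}$ (for $v$ in a positive cone $C$ of $u$): the triangle bounded by the boundary rays of $C$ and the line through $v$ perpendicular to the bisector of $C$. Routing model: vertices are identified by coordinates; a deterministic $1$-local $0$-memory routing algorithm chooses the neighbour of the current vertex $s$ to forward to as a deterministic function only of $s$, the destination $t$, and the neighbours of $s$ (with coordinates), with no memory carried by the message. Path length is the sum of Euclidean edge lengths traversed until the destination is reached. *)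

(* Defs.v *)
From Stdlib Require Import Reals List.
Open Scope R_scope.

Definition point : Type := (R * R)%type.

Definition vsub (p q : point) : point := (fst p - fst q, snd p - snd q).
Definition dot (a b : point) : R := fst a * fst b + snd a * snd b.
Definition cross (a b : point) : R := fst a * snd b - snd a * fst b.
Definition edist (p q : point) : R :=
  sqrt ((fst p - fst q) ^ 2 + (snd p - snd q) ^ 2).

Definition ray_dir (j : nat) : point := (cos (INR j * PI / 3), sin (INR j * PI / 3)).

(** Sectors: sector [k] (k = 0..5) of apex [u] is the open region strictly
    between the boundary rays at angles k*pi/3 and (k+1)*pi/3.
    Counterclockwise from the positive x-axis the sectors are
    Cbar1, C0, Cbar2, C1, Cbar0, C2, so the positive cone C_i (i = 0,1,2)
    is sector 2i+1. Boundary points are irrelevant under general position. *)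
Definition in_sector (k : nat) (u v : point) : Prop :=
  cross (ray_dir k) (vsub v u) > 0 /\ cross (vsub v u) (ray_dir (S k)) > 0.

Definition pos_sector (i : nat) : nat := (2 * i + 1)%nat.

Definition in_pos_cone (i : nat) (u v : point) : Prop :=
  (i < 3)%nat /\ in_sector (pos_sector i) u v.

Definition bisector (i : nat) : point :=
  (cos (INR (2 * pos_sector i + 1) * PI / 6), sin (INR (2 * pos_sector i + 1) * PI / 6)).

Definition proj (i : nat) (u v : point) : R := dot (vsub v u) (bisector i).

Definition general_position (P : list point) : Prop :=
  forall p q, In p P -> In q P -> p <> q ->
  forall j : nat, (j < 6)%nat -> cross (ray_dir j) (vsub q p) <> 0.

Definition half_theta6_choice (P : list point) (u v : point) : Prop :=
  In u P /\ In v P /\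
  exists i, in_pos_cone i u v /\
    forall x, In x P -> in_pos_cone i u x -> proj i u v <= proj i u x.

Definition ht6_adj (P : list point) (s v : point) : Prop :=
  half_theta6_choice P s v \/ half_theta6_choice P v s.

(** A deterministic 1-local 0-memory routing algorithm: the next vertex is a
    function of the current vertex s, the destination t and the neighbour set
    of s (points, i.e. with coordinates). *)
Definition routing_alg : Type := point -> point -> (point -> Prop) -> point.

Fixpoint route (A : routing_alg) (P : list point) (u t : point) (k : nat) : point :=
  match k with
  | O => u
  | S k' => let s := route A P u t k' in A s t (ht6_adj P s)
  end.

Fixpoint path_length (x : nat -> point) (n : nat) : R :=
  match n with
  | O => 0
  | S n' => path_length x n' + edist (x n') (x (S n'))
  end.

Definition padd (p a : point) : point := (fst p + fst a, snd p + snd a).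
Definition pscale (c : R) (a : point) : point := (c * fst a, c * snd a).

(** Canonical triangle T_{uw} for w in the positive cone C_i of u: apex u,
    the two other vertices are where the boundary rays of C_i meet the line
    through w perpendicular to the bisector (at distance proj/cos(pi/6)). *)
Definition canon_vertex1 (i : nat) (u w : point) : point :=
  padd u (pscale (proj i u w / cos (PI / 6)) (ray_dir (pos_sector i))).
Definition canon_vertex2 (i : nat) (u w : point) : point :=
  padd u (pscale (proj i u w / cos (PI / 6)) (ray_dir (S (pos_sector i)))).

Definition canon_mid (i : nat) (u w : point) : point :=
  pscale (1 / 2) (padd (canon_vertex1 i u w) (canon_vertex2 i u w)).

Definition vangle (a b : point) : R :=
  acos (dot a b / (sqrt (dot a a) * sqrt (dot b b))).

(* Main.v *)
Require Import Defs.
From Stdlib Require Import Reals List Lra Lia ClassicalEpsilon Classical.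
Open Scope R_scope.

Definition s3 := sqrt 3.
Lemma s3_sq : s3 * s3 = 3.
Proof. unfold s3. apply sqrt_sqrt. lra. Qed.
Lemma s3_pos : 0 < s3.
Proof. unfold s3. apply sqrt_lt_R0. lra. Qed.

Lemma ray0 : ray_dir 0 = (1, 0).
Proof. unfold ray_dir. replace (INR 0 * PI / 3) with 0 by (simpl; field). rewrite cos_0, sin_0; auto. Qed.
Lemma ray1 : ray_dir 1 = (1/2, s3/2).
Proof. unfold ray_dir. replace (INR 1 * PI / 3) with (PI/3) by (simpl; field). rewrite cos_PI3, sin_PI3; auto. Qed.
Lemma ray2 : ray_dir 2 = (-(1/2), s3/2).
Proof. unfold ray_dir. replace (INR 2 * PI / 3) with (PI - PI/3) by (simpl; field).
  rewrite Rtrigo_facts.cos_pi_minus, sin_PI_x, cos_PI3, sin_PI3; auto. Qed.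
Lemma ray3 : ray_dir 3 = (-1, 0).
Proof. unfold ray_dir. replace (INR 3 * PI / 3) with PI by (simpl; field). rewrite cos_PI, sin_PI; auto. Qed.
Lemma ray4 : ray_dir 4 = (-(1/2), -(s3/2)).
Proof. unfold ray_dir. replace (INR 4 * PI / 3) with (PI/3 + PI) by (simpl; field).
  rewrite neg_cos, neg_sin, cos_PI3, sin_PI3; auto. Qed.
Lemma ray5 : ray_dir 5 = (1/2, -(s3/2)).
Proof. unfold ray_dir. replace (INR 5 * PI / 3) with ((PI - PI/3) + PI) by (simpl; field).
  rewrite neg_cos, neg_sin, Rtrigo_facts.cos_pi_minus, sin_PI_x, cos_PI3, sin_PI3.
  f_equal; ring. Qed.
Lemma ray6 : ray_dir 6 = (1, 0).
Proof. unfold ray_dir. replace (INR 6 * PI / 3) with (2*PI) by (simpl; field). rewrite cos_2PI, sin_2PI; auto. Qed.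
Lemma bis0 : bisector 0 = (0, 1).
Proof. unfold bisector, pos_sector. replace (INR (2 * (2 * 0 + 1) + 1) * PI / 6) with (PI/2) by (simpl; field).
  rewrite cos_PI2, sin_PI2; auto. Qed.
Lemma bis1 : bisector 1 = (-(s3/2), -(1/2)).
Proof. unfold bisector, pos_sector. replace (INR (2 * (2 * 1 + 1) + 1) * PI / 6) with (PI/6 + PI) by (simpl; field).
  rewrite neg_cos, neg_sin, cos_PI6, sin_PI6; auto. Qed.
Lemma bis2 : bisector 2 = (s3/2, -(1/2)).
Proof. unfold bisector, pos_sector. replace (INR (2 * (2 * 2 + 1) + 1) * PI / 6) with ((PI - PI/6) + PI) by (simpl; field).
  rewrite neg_cos, neg_sin, Rtrigo_facts.cos_pi_minus, sin_PI_x, cos_PI6, sin_PI6. unfold s3; f_equal; ring. Qed.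

Inductive ix := X0 | X1 | X2.
Definition nx (j : ix) : ix := match j with X0 => X1 | X1 => X2 | X2 => X0 end.
Definition nat_of_ix (j : ix) : nat := match j with X0 => 0%nat | X1 => 1%nat | X2 => 2%nat end.
Definition G (j : ix) (p : point) : R :=
  match j with
  | X0 => snd p
  | X1 => -(s3/2) * fst p - snd p / 2
  | X2 => (s3/2) * fst p - snd p / 2
  end.

Lemma Gsum j p : G j p + G (nx j) p + G (nx (nx j)) p = 0.
Proof. destruct j; simpl; field. Qed.

Lemma Gsum0 p : G X0 p + G X1 p + G X2 p = 0.
Proof. apply (Gsum X0). Qed.

Lemma dist_G p q : (fst p - fst q)^2 + (snd p - snd q)^2 =
  (2/3) * ((G X0 p - G X0 q)^2 + (G X1 p - G X1 q)^2 + (G X2 p - G X2 q)^2).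
Proof.
  transitivity ((2/3) * ((3/2)*(snd p - snd q)^2 + (s3*s3/2)*(fst p - fst q)^2)).
  - rewrite s3_sq. field.
  - unfold G. field.
Qed.

Lemma Gle_all_eq p q : (forall m, G m p <= G m q) -> p = q.
Proof.
  intros H. pose proof (H X0). pose proof (H X1). pose proof (H X2).
  pose proof (Gsum0 p). pose proof (Gsum0 q).
  destruct p as [a b], q as [c d]. unfold G in *; simpl in *.
  pose proof s3_pos.
  assert (b = d) by lra. assert (s3 * a = s3 * c) by lra.
  f_equal; [|auto]. apply Rmult_eq_reg_l with s3; lra.
Qed.

Definition gp (P : list point) : Prop :=
  forall p q, In p P -> In q P -> p <> q -> forall m, G m p <> G m q.

Lemma gp_of P : general_position P -> gp P.
Proof.
  intros H p q Hp Hq Hne m Heq.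
  destruct m.
  - apply (H p q Hp Hq Hne 0%nat ltac:(lia)). rewrite ray0. unfold cross, vsub; simpl.
    unfold G in Heq. lra.
  - apply (H p q Hp Hq Hne 2%nat ltac:(lia)). rewrite ray2. unfold cross, vsub; simpl.
    unfold G in Heq. lra.
  - apply (H p q Hp Hq Hne 4%nat ltac:(lia)). rewrite ray4. unfold cross, vsub; simpl.
    unfold G in Heq. lra.
Qed.

Definition posc (j : ix) (u v : point) : Prop :=
  G (nx j) v < G (nx j) u /\ G (nx (nx j)) v < G (nx (nx j)) u.

Lemma cone_iff j u v : in_pos_cone (nat_of_ix j) u v <-> posc j u v.
Proof.
  unfold in_pos_cone, in_sector, pos_sector, posc.
  destruct j; simpl nat_of_ix; simpl (2 * _ + 1)%nat;
  [rewrite ray1, ray2 | rewrite ray3, ray4 | rewrite ray5, ray6];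
  unfold cross, vsub, G; simpl; (split; intros H; [destruct H as (_&H1&H2); split; lra | split; [lia | destruct H; split; lra]]).
Qed.

Lemma proj_G j u v : proj (nat_of_ix j) u v = G j v - G j u.
Proof.
  unfold proj, dot, vsub. destruct j; simpl nat_of_ix;
  [rewrite bis0 | rewrite bis1 | rewrite bis2]; unfold G; simpl; field.
Qed.

Lemma ix_of_nat i : (i < 3)%nat -> exists j, i = nat_of_ix j.
Proof. intros. destruct i as [|[|[|]]]; [exists X0|exists X1|exists X2|lia]; auto. Qed.

Definition inS (v w z : point) : Prop := forall m, G m z <= Rmax (G m v) (G m w).
Definition J (j : ix) (v w : point) (P : list point) : Prop :=
  G j v < G j w /\ forall r, In r P -> inS v w r -> r <> v -> G j v < G j r.
Definition Psi (j : ix) (v w : point) : R :=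
  (2*s3/3) * ((G j w - G j v) - Rmin (G (nx j) w - G (nx j) v) (G (nx (nx j)) w - G (nx (nx j)) v)).

Lemma ix_cases j m : m = j \/ m = nx j \/ m = nx (nx j).
Proof. destruct j, m; simpl; auto. Qed.

Lemma exists_gt p q : p <> q -> exists m, G m p < G m q.
Proof.
  intros Hne. apply NNPP. intro Hn. apply Hne. symmetry. apply Gle_all_eq.
  intro m. apply Rnot_lt_le. intro Hl. apply Hn. exists m. auto.
Qed.

Lemma inS_w v w : inS v w w.
Proof. intro m. apply Rmax_r. Qed.
Lemma inS_v v w : inS v w v.
Proof. intro m. apply Rmax_l. Qed.
Lemma inS_trans v w x z : inS v w x -> inS x w z -> inS v w z.
Proof.
  intros H1 H2 m. specialize (H1 m). specialize (H2 m).
  pose proof (Rmax_l (G m v) (G m w)). pose proof (Rmax_r (G m v) (G m w)).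
  apply Rle_trans with (1 := H2). apply Rmax_lub; lra.
Qed.
Lemma inS_sub v w x z : inS v w x -> inS v x z -> inS v w z.
Proof.
  intros H1 H2 m. specialize (H1 m). specialize (H2 m).
  pose proof (Rmax_l (G m v) (G m w)).
  apply Rle_trans with (1 := H2). apply Rmax_lub; lra.
Qed.
Lemma inS_sym v y z : inS v y z -> inS y v z.
Proof. intros H m. rewrite Rmax_comm. apply H. Qed.

Lemma not_v_in P v x w : gp P -> In v P -> In x P -> x <> v -> v <> w ->
  inS v w x -> inS x w v -> False.
Proof.
  intros Hgp Hv Hx Hxv Hvw H1 H2.
  destruct (exists_gt w v (not_eq_sym Hvw)) as [m Hm].
  specialize (H1 m). specialize (H2 m).
  unfold Rmax in *. destruct (Rle_dec (G m v) (G m w)); try lra.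
  destruct (Rle_dec (G m x) (G m w)); try lra.
  apply (Hgp x v Hx Hv Hxv m). lra.
Qed.

Lemma posc_choice P j a b : gp P -> In a P -> In b P -> posc j a b ->
  (forall z, In z P -> z <> a -> z <> b -> ~ inS a b z) -> half_theta6_choice P a b.
Proof.
  intros Hgp Ha Hb Hc Hemp. split; [auto|split; [auto|]].
  exists (nat_of_ix j). split; [apply cone_iff; auto|].
  intros x Hx Hcx. apply cone_iff in Hcx. rewrite !proj_G.
  destruct (Rle_dec (G j b) (G j x)) as [|Hlt]; [lra|]. exfalso.
  apply Rnot_le_lt in Hlt. destruct Hc as [Hc1 Hc2]. destruct Hcx as [Hx1 Hx2].
  apply (Hemp x Hx).
  - intro E; subst; lra.
  - intro E; subst; lra.
  - intro m. pose proof (Rmax_l (G m a) (G m b)). pose proof (Rmax_r (G m a) (G m b)).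
    destruct (ix_cases j m) as [E|[E|E]]; subst; lra.
Qed.

Lemma classify P v y : gp P -> In v P -> In y P -> v <> y ->
  (exists j, posc j v y) \/ (exists j, posc j y v).
Proof.
  intros Hgp Hv Hy Hne.
  pose proof (Hgp v y Hv Hy Hne X0). pose proof (Hgp v y Hv Hy Hne X1).
  pose proof (Hgp v y Hv Hy Hne X2).
  cbv [posc nx].
  destruct (Rdichotomy _ _ H); destruct (Rdichotomy _ _ H0);
  destruct (Rdichotomy _ _ H1).
  all: first [ left; exists X0; split; lra | left; exists X1; split; lra | left; exists X2; split; lra
             | right; exists X0; split; lra | right; exists X1; split; lra | right; exists X2; split; lra].
Qed.

Lemma empty_adj P v y : gp P -> In v P -> In y P -> v <> y ->
  (forall z, In z P -> z <> v -> z <> y -> ~ inS v y z) -> ht6_adj P v y.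
Proof.
  intros Hgp Hv Hy Hne Hemp.
  destruct (classify P v y Hgp Hv Hy Hne) as [[j Hj]|[j Hj]].
  - left. apply (posc_choice P j); auto.
  - right. apply (posc_choice P j); auto.
    intros z Hz H1 H2 H3. apply (Hemp z Hz H2 H1). apply inS_sym. auto.
Qed.

Lemma exists_min {A : Type} (Q : A -> Prop) (f : A -> R) (l : list A) :
  (exists x, In x l /\ Q x) -> exists x, In x l /\ Q x /\ forall y, In y l -> Q y -> f x <= f y.
Proof.
  induction l as [|a l IH]; intros [x [Hx HQ]]; [destruct Hx|].
  destruct (classic (exists x, In x l /\ Q x)) as [He|Hne].
  - destruct (IH He) as [m [Hm [HQm Hmin]]].
    destruct (classic (Q a /\ f a < f m)) as [[Ha Hlt]|Hn].
    + exists a. split; [left; auto|split; auto].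
      intros y [<-|Hy] HQy; [lra|]. specialize (Hmin y Hy HQy). lra.
    + exists m. split; [right; auto|split; auto].
      intros y [<-|Hy] HQy; [|auto].
      apply Rnot_lt_le. intro. apply Hn. auto.
  - destruct Hx as [<-|Hx]; [|exfalso; apply Hne; exists x; auto].
    exists a. split; [left; auto|split; auto].
    intros y [<-|Hy] HQy; [lra|]. exfalso; apply Hne; exists y; auto.
Qed.

Definition sz (v y : point) : R :=
  Rmax (G X0 v) (G X0 y) + Rmax (G X1 v) (G X1 y) + Rmax (G X2 v) (G X2 y).

Lemma sz_lt P v y z : gp P -> In v P -> In y P -> In z P -> v <> y -> z <> y ->
  inS v y z -> sz v z < sz v y.
Proof.
  intros Hgp Hv Hy Hz Hvy Hzy H.
  assert (Hle : forall m, Rmax (G m v) (G m z) <= Rmax (G m v) (G m y)).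
  { intro m. apply Rmax_lub; [apply Rmax_l| apply H]. }
  destruct (exists_gt v y Hvy) as [k Hk].
  assert (Hlt : Rmax (G k v) (G k z) < Rmax (G k v) (G k y)).
  { specialize (H k). pose proof (Hgp z y Hz Hy Hzy k).
    unfold Rmax in *. destruct (Rle_dec (G k v) (G k y)); try lra.
    destruct (Rle_dec (G k v) (G k z)); lra. }
  unfold sz. pose proof (Hle X0). pose proof (Hle X1). pose proof (Hle X2).
  destruct k; lra.
Qed.

Lemma witness P v w r m : gp P -> In v P -> In r P -> inS v w r -> r <> v -> G m r < G m v ->
  exists y, ht6_adj P v y /\ inS v w y /\ y <> v /\ G m y < G m v.
Proof.
  intros Hgp Hv Hr HS Hrv Hm.
  destruct (exists_min (fun y => inS v w y /\ y <> v /\ G m y < G m v) (sz v) P)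
    as [y [Hy [[HSy [Hyv Hmy]] Hmin]]].
  { exists r. auto. }
  exists y. split; [|auto].
  apply empty_adj; auto.
  intros z Hz Hzv Hzy HSz.
  assert (Hq : inS v w z /\ z <> v /\ G m z < G m v).
  { split; [apply (inS_sub v w y); auto|split; auto].
    specialize (HSz m). pose proof (Hgp z v Hz Hv Hzv m).
    unfold Rmax in HSz. destruct (Rle_dec (G m v) (G m y)); lra. }
  specialize (Hmin z Hz Hq).
  pose proof (sz_lt P v y z Hgp Hv Hy Hz (not_eq_sym Hyv) Hzy HSz). lra.
Qed.

Lemma helper_sq bj bk bl : 0 < bj -> bk <= 0 -> bl = - bj - bk ->
  sqrt ((2/3) * (bj^2 + bk^2 + bl^2)) <= (2*s3/3) * (bj - bk).
Proof.
  intros H1 H2 H3. pose proof s3_pos. pose proof s3_sq.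
  assert (HT : 0 <= (2*s3/3) * (bj - bk)).
  { apply Rmult_le_pos; lra. }
  rewrite <- (sqrt_square _ HT). apply sqrt_le_1_alt.
  subst bl.
  replace ((2 * s3 / 3 * (bj - bk)) * (2 * s3 / 3 * (bj - bk))) with ((4/9) * (s3*s3) * (bj-bk)^2) by field.
  rewrite H0. nra.
Qed.

Lemma core bj b1 b2 aj a1 a2 : bj + b1 + b2 = 0 -> aj + a1 + a2 = 0 -> 0 < bj ->
  bj <= Rmax 0 aj -> b1 <= Rmax 0 a1 -> b2 <= Rmax 0 a2 -> 0 < aj ->
  sqrt ((2/3)*(bj^2+b1^2+b2^2)) + (2*s3/3)*((aj - bj) - Rmin (a1 - b1) (a2 - b2))
   <= (2*s3/3)*(aj - Rmin a1 a2).
Proof.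
  intros Hb Ha Hbj H0 H1 H2 Haj. pose proof s3_pos.
  assert (Hc : 0 < 2*s3/3) by lra.
  assert (Hmin1 : Rmin a1 a2 <= a1) by apply Rmin_l.
  assert (Hmin2 : Rmin a1 a2 <= a2) by apply Rmin_r.
  assert (K1 : b1 <= 0 -> Rmin (a1 - b1) (a2 - b2) = a1 - b1 ->
     sqrt ((2/3)*(bj^2+b1^2+b2^2)) + (2*s3/3)*((aj - bj) - Rmin (a1 - b1) (a2 - b2))
     <= (2*s3/3)*(aj - Rmin a1 a2)).
  { intros Hb1 E. rewrite E.
    pose proof (helper_sq bj b1 b2 Hbj Hb1 ltac:(lra)).
    assert ((2*s3/3)*(bj - b1) + (2*s3/3)*((aj - bj) - (a1 - b1)) <= (2*s3/3)*(aj - Rmin a1 a2)).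
    { rewrite <- Rmult_plus_distr_l. apply Rmult_le_compat_l; lra. }
    lra. }
  assert (K2 : b2 <= 0 -> Rmin (a1 - b1) (a2 - b2) = a2 - b2 ->
     sqrt ((2/3)*(bj^2+b1^2+b2^2)) + (2*s3/3)*((aj - bj) - Rmin (a1 - b1) (a2 - b2))
     <= (2*s3/3)*(aj - Rmin a1 a2)).
  { intros Hb2 E. rewrite E.
    pose proof (helper_sq bj b2 b1 Hbj Hb2 ltac:(lra)).
    replace (bj ^ 2 + b1 ^ 2 + b2 ^ 2) with (bj ^ 2 + b2 ^ 2 + b1 ^ 2) by ring.
    assert ((2*s3/3)*(bj - b2) + (2*s3/3)*((aj - bj) - (a2 - b2)) <= (2*s3/3)*(aj - Rmin a1 a2)).
    { rewrite <- Rmult_plus_distr_l. apply Rmult_le_compat_l; lra. }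
    lra. }
  rewrite (Rmax_right 0 aj ltac:(lra)) in H0.
  (destruct (Rle_lt_dec 0 a1) as [h1|h1];
   [rewrite (Rmax_right _ _ h1) in H1 | rewrite (Rmax_left 0 a1 ltac:(lra)) in H1]);
  (destruct (Rle_lt_dec 0 a2) as [h2|h2];
   [rewrite (Rmax_right _ _ h2) in H2 | rewrite (Rmax_left 0 a2 ltac:(lra)) in H2]);
  destruct (Rle_lt_dec b1 0); destruct (Rle_lt_dec b2 0);
  (destruct (Rle_lt_dec (a1 - b1) (a2 - b2)) as [Hr|Hr];
  [pose proof (Rmin_left _ _ Hr) as E | pose proof (Rmin_right (a1-b1) (a2-b2) ltac:(lra)) as E];
  first [ apply K1; lra | apply K2; lra ]).
Qed.

Definition isMin (P : list point) (v w : point) (m : ix) (x : point) : Prop :=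
  In x P /\ inS v w x /\ x <> v /\
  forall y, In y P -> inS v w y -> y <> v -> G m x <= G m y.

Lemma adj_min P v w m x : gp P -> In v P -> J m v w P -> isMin P v w m x -> ht6_adj P v x.
Proof.
  intros Hgp Hv [Hjw HJ] [Hx [HSx [Hxv Hmin]]].
  apply empty_adj; auto.
  intros z Hz Hzv Hzx HSz.
  assert (HSz' : inS v w z) by (apply (inS_sub v w x); auto).
  pose proof (HJ z Hz HSz' Hzv). pose proof (HJ x Hx HSx Hxv).
  pose proof (Hmin z Hz HSz' Hzv). specialize (HSz m).
  pose proof (Hgp z x Hz Hx Hzx m).
  unfold Rmax in HSz. destruct (Rle_dec (G m v) (G m x)); lra.
Qed.

Lemma J_min P v w m x : gp P -> In v P -> In w P -> v <> w -> J m v w P ->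
  isMin P v w m x -> x <> w -> J m x w P.
Proof.
  intros Hgp Hv Hw Hvw [Hjw HJ] [Hx [HSx [Hxv Hmin]]] Hxw. split.
  - pose proof (Hmin w Hw (inS_w v w) (not_eq_sym Hvw)).
    pose proof (Hgp x w Hx Hw Hxw m). lra.
  - intros r Hr HSr Hrx.
    assert (Hrv : r <> v).
    { intro E; subst r. apply (not_v_in P v x w); auto. }
    pose proof (Hmin r Hr (inS_trans v w x r HSx HSr) Hrv).
    pose proof (Hgp x r Hx Hr (not_eq_sym Hrx) m). lra.
Qed.

Lemma dist_Gj j v x : (fst v - fst x)^2 + (snd v - snd x)^2 =
  (2/3) * ((G j x - G j v)^2 + (G (nx j) x - G (nx j) v)^2 + (G (nx (nx j)) x - G (nx (nx j)) v)^2).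
Proof. rewrite dist_G. destruct j; simpl nx; ring. Qed.

Lemma len_min P v w m x : J m v w P -> isMin P v w m x ->
  edist v x + Psi m x w <= Psi m v w.
Proof.
  intros [Hjw HJ] [Hx [HSx [Hxv Hmin]]].
  pose proof (HJ x Hx HSx Hxv) as Hjx.
  unfold edist, Psi. rewrite (dist_Gj m).
  pose proof (Gsum m x) as Sx. pose proof (Gsum m v) as Sv. pose proof (Gsum m w) as Sw.
  assert (Hk : forall k, G k x - G k v <= Rmax 0 (G k w - G k v)).
  { intro k. specialize (HSx k). unfold Rmax in *.
    destruct (Rle_dec (G k v) (G k w)); destruct (Rle_dec 0 (G k w - G k v)); lra. }
  pose proof (core (G m x - G m v) (G (nx m) x - G (nx m) v) (G (nx (nx m)) x - G (nx (nx m)) v)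
                   (G m w - G m v) (G (nx m) w - G (nx m) v) (G (nx (nx m)) w - G (nx (nx m)) v)
                   ltac:(lra) ltac:(lra) ltac:(lra) (Hk m) (Hk (nx m)) (Hk (nx (nx m))) ltac:(lra)) as C.
  replace (G m w - G m x) with ((G m w - G m v) - (G m x - G m v)) by ring.
  replace (G (nx m) w - G (nx m) x) with ((G (nx m) w - G (nx m) v) - (G (nx m) x - G (nx m) v)) by ring.
  replace (G (nx (nx m)) w - G (nx (nx m)) x) with ((G (nx (nx m)) w - G (nx (nx m)) v) - (G (nx (nx m)) x - G (nx (nx m)) v)) by ring.
  exact C.
Qed.

Definition WN (v w : point) (N : point -> Prop) (m : ix) : Prop :=
  exists y, N y /\ inS v w y /\ y <> v /\ G m y < G m v.
Definition cand v w N m := G m v < G m w /\ ~ WN v w N m.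
Definition selP v w N m := cand v w N m /\ forall m', cand v w N m' -> Psi m v w <= Psi m' v w.
Definition sel v w N : ix := epsilon (inhabits X0) (selP v w N).
Definition argP (v w : point) (N : point -> Prop) (m : ix) (x : point) : Prop :=
  N x /\ inS v w x /\ x <> v /\ forall y, N y -> inS v w y -> y <> v -> G m x <= G m y.
Definition Alg : routing_alg := fun s t N => epsilon (inhabits s) (argP s t N (sel s t N)).

Lemma adj_in P v y : ht6_adj P v y -> In y P.
Proof. intros [[_ [H _]]|[H _]]; auto. Qed.

Lemma J_cand P m v w : J m v w P -> cand v w (ht6_adj P v) m.
Proof.
  intros [Hw HJ]. split; auto. intros [y [Hy [HS [Hne Hlt]]]].
  pose proof (HJ y (adj_in P v y Hy) HS Hne). lra.
Qed.

Lemma cand_J P m v w : gp P -> In v P -> cand v w (ht6_adj P v) m -> J m v w P.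
Proof.
  intros Hgp Hv [Hw Hn]. split; auto.
  intros r Hr HS Hne. apply Rnot_le_lt. intro Hle.
  assert (Hlt : G m r < G m v).
  { pose proof (Hgp r v Hr Hv Hne m). lra. }
  destruct (witness P v w r m Hgp Hv Hr HS Hne Hlt) as [y Hy].
  apply Hn. exists y. auto.
Qed.

Lemma sel_spec P j v w : gp P -> In v P -> J j v w P ->
  J (sel v w (ht6_adj P v)) v w P /\ Psi (sel v w (ht6_adj P v)) v w <= Psi j v w.
Proof.
  intros Hgp Hv HJ.
  assert (Hex : exists m, selP v w (ht6_adj P v) m).
  { destruct (exists_min (cand v w (ht6_adj P v)) (fun m => Psi m v w) (X0 :: X1 :: X2 :: nil))
      as [m [_ [Hc Hmin]]].
    - exists j. split; [destruct j; simpl; auto|]. apply J_cand; auto.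
    - exists m. split; auto. intros m' Hc'. apply Hmin; auto. destruct m'; simpl; auto. }
  pose proof (epsilon_spec (inhabits X0) _ Hex) as [Hc Hmin].
  fold (sel v w (ht6_adj P v)) in Hc, Hmin.
  split; [apply cand_J; auto|]. apply Hmin. apply J_cand; auto.
Qed.

Lemma Alg_spec P j v w : gp P -> In v P -> In w P -> v <> w -> J j v w P ->
  exists m, isMin P v w m (Alg v w (ht6_adj P v)) /\ J m v w P /\ Psi m v w <= Psi j v w.
Proof.
  intros Hgp Hv Hw Hvw HJ.
  destruct (sel_spec P j v w Hgp Hv HJ) as [HJm HPsi].
  set (m := sel v w (ht6_adj P v)) in *.
  exists m. split; [|auto].
  destruct (exists_min (fun y => inS v w y /\ y <> v) (G m) P) as [x0 [Hx0 [[HS0 Hne0] Hmin0]]].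
  { exists w. split; auto. split; [apply inS_w| auto]. }
  assert (Hmin0' : isMin P v w m x0).
  { refine (conj Hx0 (conj HS0 (conj Hne0 _))). intros y Hy HS Hne. apply Hmin0; auto. }
  pose proof (adj_min P v w m x0 Hgp Hv HJm Hmin0') as Hadj.
  assert (Hex : exists x, argP v w (ht6_adj P v) m x).
  { exists x0. refine (conj Hadj (conj HS0 (conj Hne0 _))).
    intros y Hy HS Hne. apply Hmin0; auto. apply (adj_in P v y Hy). }
  pose proof (epsilon_spec (inhabits v) _ Hex) as [HN [HS [Hne Hmin]]].
  unfold Alg. fold m.
  set (x := epsilon (inhabits v) (argP v w (ht6_adj P v) m)) in *.
  split; [apply (adj_in P v x HN)|]. split; auto. split; auto.
  intros y Hy HSy Hney. specialize (Hmin x0 Hadj HS0 Hne0).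
  specialize (Hmin0 y Hy (conj HSy Hney)). lra.
Qed.

Definition cnt (v w : point) (P : list point) : nat :=
  length (filter (fun p => if excluded_middle_informative (inS v w p) then true else false) P).

Lemma filter_le {A} (f g : A -> bool) (l : list A) :
  (forall p, In p l -> f p = true -> g p = true) -> (length (filter f l) <= length (filter g l))%nat.
Proof.
  induction l as [|a l IH]; intros H; simpl; [lia|].
  assert (IH' := IH (fun p Hp => H p (or_intror Hp))).
  destruct (f a) eqn:Ef; destruct (g a) eqn:Eg; simpl; try lia.
  rewrite (H a (or_introl eq_refl) Ef) in Eg. discriminate.
Qed.

Lemma filter_lt {A} (f g : A -> bool) (l : list A) :
  (forall p, In p l -> f p = true -> g p = true) ->
  (exists p, In p l /\ g p = true /\ f p = false) ->
  (length (filter f l) < length (filter g l))%nat.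
Proof.
  induction l as [|a l IH]; intros H [p [Hp [Hg Hf]]]; [destruct Hp|].
  simpl.
  assert (Hle := filter_le f g l (fun p Hp => H p (or_intror Hp))).
  destruct Hp as [<-|Hp].
  - rewrite Hg, Hf. simpl. lia.
  - assert (IH' := IH (fun p Hp => H p (or_intror Hp)) (ex_intro _ p (conj Hp (conj Hg Hf)))).
    destruct (f a) eqn:Ef; destruct (g a) eqn:Eg; simpl; try lia.
    rewrite (H a (or_introl eq_refl) Ef) in Eg. discriminate.
Qed.

Lemma cnt_lt P v w m x : gp P -> In v P -> v <> w -> isMin P v w m x -> (cnt x w P < cnt v w P)%nat.
Proof.
  intros Hgp Hv Hvw [Hx [HS [Hne _]]]. unfold cnt. apply filter_lt.
  - intros p Hp. destruct (excluded_middle_informative (inS x w p)) as [H1|]; [|discriminate].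
    intros _. destruct (excluded_middle_informative (inS v w p)) as [|H2]; auto.
    exfalso. apply H2. apply (inS_trans v w x p); auto.
  - exists v. split; auto.
    destruct (excluded_middle_informative (inS v w v)) as [|H2]; [|exfalso; apply H2; apply inS_v].
    split; auto.
    destruct (excluded_middle_informative (inS x w v)) as [H3|]; auto.
    exfalso. apply (not_v_in P v x w); auto.
Qed.

Lemma step P j v w : gp P -> In v P -> In w P -> v <> w -> J j v w P ->
  exists m, In (Alg v w (ht6_adj P v)) P /\ ht6_adj P v (Alg v w (ht6_adj P v)) /\
    edist v (Alg v w (ht6_adj P v)) + Psi m (Alg v w (ht6_adj P v)) w <= Psi j v w /\
    (Alg v w (ht6_adj P v) = w \/ J m (Alg v w (ht6_adj P v)) w P) /\
    (cnt (Alg v w (ht6_adj P v)) w P < cnt v w P)%nat.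
Proof.
  intros Hgp Hv Hw Hvw HJ.
  destruct (Alg_spec P j v w Hgp Hv Hw Hvw HJ) as [m [Hmin [HJm HPsi]]].
  set (x := Alg v w (ht6_adj P v)) in *.
  exists m. split; [destruct Hmin; auto|].
  split; [apply (adj_min P v w m x); auto|].
  split; [pose proof (len_min P v w m x HJm Hmin); lra|].
  split; [|apply (cnt_lt P v w m x); auto].
  destruct (classic (x = w)); [left; auto|right].
  apply (J_min P v w m x); auto.
Qed.

Lemma route_inv P u w j0 : gp P -> In u P -> In w P -> J j0 u w P ->
  forall k, (forall m, (m < k)%nat -> route Alg P u w m <> w) ->
   In (route Alg P u w k) P /\
   (exists j, (route Alg P u w k = w \/ J j (route Alg P u w k) w P) /\
              path_length (route Alg P u w) k + Psi j (route Alg P u w k) w <= Psi j0 u w) /\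
   (cnt (route Alg P u w k) w P + k <= cnt u w P)%nat /\
   (forall m, (m < k)%nat -> ht6_adj P (route Alg P u w m) (route Alg P u w (S m))).
Proof.
  intros Hgp Hu Hw HJ0. induction k as [|k IH]; intros Hne.
  - simpl. split; auto. split; [exists j0; split; [right; auto|lra]|]. split; [lia|].
    intros m Hm; lia.
  - destruct IH as [Hin [[j [Hj Hlen]] [Hcnt Hadj]]].
    { intros m Hm. apply Hne. lia. }
    assert (Hk : route Alg P u w k <> w) by (apply Hne; lia).
    destruct Hj as [E|Hj]; [contradiction|].
    destruct (step P j (route Alg P u w k) w Hgp Hin Hw Hk Hj) as [m [H1 [H2 [H3 [H4 H5]]]]].
    change (route Alg P u w (S k)) with (Alg (route Alg P u w k) w (ht6_adj P (route Alg P u w k))).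
    split; auto. split.
    + exists m. split; auto. simpl path_length.
      change (route Alg P u w (S k)) with (Alg (route Alg P u w k) w (ht6_adj P (route Alg P u w k))).
      lra.
    + split; [lia|]. intros m' Hm'.
      destruct (Nat.eq_dec m' k) as [->|Hmk]; [auto|]. apply Hadj. lia.
Qed.

Lemma least (Pr : nat -> Prop) : (exists n, Pr n) -> exists n, Pr n /\ forall m, (m < n)%nat -> ~ Pr m.
Proof.
  intros [n Hn].
  assert (H : forall N n, (n <= N)%nat -> Pr n -> exists n, Pr n /\ forall m, (m < n)%nat -> ~ Pr m).
  { induction N as [|N IH]; intros n0 Hle Hp.
    - exists n0. split; auto. intros m Hm. lia.
    - destruct (classic (exists m, (m < n0)%nat /\ Pr m)) as [[m [Hm Hpm]]|Hno].
      + apply (IH m); auto. lia.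
      + exists n0. split; auto. intros m Hm Hpm. apply Hno. exists m. auto. }
  apply (H n n); auto.
Qed.

Definition bvec (j : ix) : point :=
  match j with X0 => (0, 1) | X1 => (-(s3/2), -(1/2)) | X2 => (s3/2, -(1/2)) end.

Lemma G_dot j p : G j p = fst p * fst (bvec j) + snd p * snd (bvec j).
Proof. destruct j; simpl; field. Qed.

Lemma bvec_unit j : fst (bvec j) * fst (bvec j) + snd (bvec j) * snd (bvec j) = 1.
Proof.
  pose proof s3_sq. destruct j; simpl; [field|..];
  replace (- (s3/2) * - (s3/2)) with (s3*s3/4) by field;
  replace (s3/2 * (s3/2)) with (s3*s3/4) by field; rewrite H; field.
Qed.

Lemma mid_eq j u w : vsub (canon_mid (nat_of_ix j) u w) u =
  ((G j w - G j u) * fst (bvec j), (G j w - G j u) * snd (bvec j)).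
Proof.
  unfold canon_mid, canon_vertex1, canon_vertex2, padd, pscale, vsub.
  rewrite proj_G, cos_PI6. fold s3.
  set (h := G j w - G j u). pose proof s3_pos. pose proof s3_sq.
  set (c := h / (s3/2)).
  assert (Hc : h = c * s3 / 2) by (unfold c; field; lra).
  assert (Hh : h * s3 = 3 * c / 2).
  { rewrite Hc. replace (c * s3 / 2 * s3) with (c * (s3 * s3) / 2) by field. rewrite H0. field. }
  destruct j;
  [change (pos_sector (nat_of_ix X0)) with 1%nat; rewrite ray1, ray2
  |change (pos_sector (nat_of_ix X1)) with 3%nat; rewrite ray3, ray4
  |change (pos_sector (nat_of_ix X2)) with 5%nat; rewrite ray5, ray6];
  simpl; f_equal; lra.
Qed.

Lemma bound_psi j u w : posc j u w ->
  Psi j u w <= (sqrt 3 * cos (vangle (vsub w u) (vsub (canon_mid (nat_of_ix j) u w) u))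
       + sin (vangle (vsub w u) (vsub (canon_mid (nat_of_ix j) u w) u))) * edist u w.
Proof.
  intros [Hp1 Hp2]. pose proof s3_pos as Hs. pose proof s3_sq as Hs2.
  pose proof (Gsum j w) as Sw. pose proof (Gsum j u) as Su.
  set (h := G j w - G j u). set (a1 := G (nx j) w - G (nx j) u).
  set (a2 := G (nx (nx j)) w - G (nx (nx j)) u).
  assert (Hsum : h + a1 + a2 = 0) by (unfold h, a1, a2; lra).
  assert (Ha1 : a1 < 0) by (unfold a1; lra). assert (Ha2 : a2 < 0) by (unfold a2; lra).
  assert (Hh : 0 < h) by lra.
  set (Lsq := (fst u - fst w)^2 + (snd u - snd w)^2).
  assert (HL2 : Lsq = (2/3) * (h^2 + a1^2 + a2^2)) by (unfold Lsq; rewrite (dist_Gj j u w); reflexivity).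
  assert (HLpos : 0 < Lsq) by (rewrite HL2; nra).
  set (L := edist u w).
  assert (HL : L = sqrt Lsq) by reflexivity.
  assert (HLp : 0 < L) by (rewrite HL; apply sqrt_lt_R0; auto).
  assert (HLL : L * L = Lsq) by (rewrite HL; apply sqrt_sqrt; lra).
  unfold vangle. rewrite mid_eq. fold h.
  assert (E1 : dot (vsub w u) (h * fst (bvec j), h * snd (bvec j)) = h * h).
  { unfold dot, vsub; simpl. unfold h at 3. rewrite !(G_dot j). ring. }
  assert (E2 : sqrt (dot (h * fst (bvec j), h * snd (bvec j)) (h * fst (bvec j), h * snd (bvec j))) = h).
  { unfold dot; simpl.
    replace (h * fst (bvec j) * (h * fst (bvec j)) + h * snd (bvec j) * (h * snd (bvec j)))
      with (h * h * (fst (bvec j) * fst (bvec j) + snd (bvec j) * snd (bvec j))) by ring.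
    rewrite bvec_unit, Rmult_1_r. apply sqrt_square. lra. }
  assert (E3 : sqrt (dot (vsub w u) (vsub w u)) = L).
  { rewrite HL. f_equal. unfold dot, vsub, Lsq; simpl. ring. }
  rewrite E1, E2, E3.
  replace (h * h / (L * h)) with (h / L) by (field; lra).
  set (r := h / L).
  assert (Hr2 : r * r = h * h / Lsq) by (unfold r; rewrite <- HLL; field; lra).
  assert (Hr : -1 <= r <= 1).
  { assert (0 < r) by (unfold r; apply Rdiv_lt_0_compat; lra).
    assert (r * r <= 1).
    { rewrite Hr2. apply (Rmult_le_reg_r Lsq); auto. unfold Rdiv. rewrite Rmult_assoc, Rinv_l by lra.
      rewrite HL2. replace h with (- a1 - a2) by lra. pose proof (pow2_ge_0 (a1 - a2)). nra. }
    nra. }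
  rewrite cos_acos, sin_acos by auto.
  set (t := Rabs (a1 - a2) * s3 / (3 * L)).
  assert (Ht : 1 - r² = t * t).
  { unfold Rsqr. rewrite Hr2. unfold t.
    replace (Rabs (a1 - a2) * s3 / (3 * L) * (Rabs (a1 - a2) * s3 / (3 * L)))
      with ((Rabs (a1 - a2) * Rabs (a1 - a2)) * (s3 * s3) / (9 * (L * L))) by (field; lra).
    rewrite <- Rabs_mult, Rabs_right by (apply Rle_ge; apply Rle_0_sqr). rewrite Hs2, HLL.
    apply (Rmult_eq_reg_r Lsq); [|lra]. field_simplify; [|lra|lra].
    rewrite HL2. replace a2 with (- h - a1) by lra. field. }
  assert (Ht0 : 0 <= t).
  { unfold t. apply Rmult_le_pos; [apply Rmult_le_pos; [apply Rabs_pos|lra]|].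
    apply Rlt_le, Rinv_0_lt_compat. lra. }
  rewrite Ht, sqrt_square by auto. fold s3.
  replace ((s3 * r + t) * L) with (s3 * h + Rabs (a1 - a2) * s3 / 3) by (unfold r, t; field; lra).
  unfold Psi. fold h a1 a2.
  assert (Hx : s3 * h + s3 * a1 + s3 * a2 = 0) by (rewrite <- !Rmult_plus_distr_l, Hsum; ring).
  unfold Rmin, Rabs. destruct (Rle_dec a1 a2); destruct (Rcase_abs (a1 - a2)). all: nra.
Qed.

Lemma Psi_ww j w : Psi j w w = 0.
Proof. unfold Psi. rewrite !Rminus_diag. unfold Rmin. destruct (Rle_dec 0 0); ring. Qed.

Theorem lemma2 :
  exists A : routing_alg,
  forall P : list point, general_position P ->
  forall u w : point, In u P -> In w P ->
  forall i : nat, in_pos_cone i u w ->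
  exists n : nat,
    route A P u w n = w /\
    (forall k, (k < n)%nat -> route A P u w k <> w) /\
    (forall k, (k < n)%nat -> ht6_adj P (route A P u w k) (route A P u w (S k))) /\
    path_length (route A P u w) n <=
      (sqrt 3 * cos (vangle (vsub w u) (vsub (canon_mid i u w) u))
       + sin (vangle (vsub w u) (vsub (canon_mid i u w) u))) * edist u w.
Proof.
  exists Alg. intros P HGP u w Hu Hw i Hc.
  pose proof (gp_of P HGP) as Hgp.
  destruct (ix_of_nat i (proj1 Hc)) as [j0 ->].
  pose proof (proj1 (cone_iff j0 u w) Hc) as Hpc.
  assert (J0 : J j0 u w P).
  { destruct Hpc as [H1 H2]. pose proof (Gsum j0 u). pose proof (Gsum j0 w).
    split; [lra|]. intros r Hr HS Hne. pose proof (Gsum j0 r).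
    pose proof (HS (nx j0)) as S1. pose proof (HS (nx (nx j0))) as S2.
    rewrite Rmax_left in S1 by lra. rewrite Rmax_left in S2 by lra.
    pose proof (Hgp r u Hr Hu Hne (nx j0)). pose proof (Hgp r u Hr Hu Hne (nx (nx j0))).
    lra. }
  assert (Hex : exists n, route Alg P u w n = w).
  { apply NNPP. intro Hno.
    destruct (route_inv P u w j0 Hgp Hu Hw J0 (S (length P))) as [_ [_ [Hc' _]]].
    { intros m _ E. apply Hno. exists m. auto. }
    pose proof (filter_length_le (fun p => if excluded_middle_informative (inS u w p) then true else false) P).
    unfold cnt in Hc'. lia. }
  destruct (least _ Hex) as [n [Hn Hlt]].
  destruct (route_inv P u w j0 Hgp Hu Hw J0 n Hlt) as [_ [[j [_ Hlen]] [_ Hadj]]].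
  exists n. split; auto. split; auto. split; auto.
  rewrite Hn, Psi_ww in Hlen.
  pose proof (bound_psi j0 u w Hpc). lra.
Qed.
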